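(* Let $K=\mathbb{F}_{q^n}$, let $\sigma$ be an automorphism of $K$ of order $n>1$ with fixed field $F=\mathbb{F}_q$, and let $f(t)=t^m-\sum_{i=0}^{m-1}a_it^i\in K[t;\sigma]$ ($a_i\in K$, $m\ge 2$) be irreducible and not right-invariant. Let $L_f=S_f\setminus\{0\}$ be the multiplicative loop of $S_f$, and let $H$ be a loop automorphism of $L_f$. Then: (i) $H(K^\times)=K^\times$ and $H|_{K^\times}=\tau$ for some group automorphism $\tau\in\mathrm{Aut}(K^\times)$. (ii) If $n\ge m-1$, then $H(t)=kt$ for some $k\in K^\times$. (iii) If $n\ge m-1$, then for all $i\in\{1,\dots,m-1\}$ and all $z\in K^\times$, $H(zt^i)=H(z)H(t)^i=\tau(z)(kt)^i=\tau(z)\Big(\prod_{l=0}^{i-1}\sigma^l(k)\Big)t^i$. (iv) If $n\ge m-1$, then $H(t^i)=H(t)^i=(kt)^i=\Big(\prod_{l=0}^{i-1}\sigma^l(k)\Big)t^i$ for all $i\in\{1,\dots,m\}$ (where $t^m$ denotes the product $t\,t^{m-1}=\sum_{i=0}^{m-1}a_it^i$ in $S_f$); in particular $H\Big(\sum_{i=0}^{m-1}a_it^i\Big)=k\sigma(k)\cdots\sigma^{m-1}(k)\sum_{i=0}^{m-1}a_it^i$.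
   Context: $R=K[t;\sigma]$ is the twisted polynomial ring: polynomials $\sum b_it^i$ with $b_i\in K$, termwise addition, and multiplication determined by $tb=\sigma(b)t$ for $b\in K$. $f$ is irreducible if it has no factorization $f=gh$ with $\deg g,\deg h<\deg f$; $f$ is right-invariant if the left ideal $Rf$ is two-sided. $S_f$ is the set of elements of $R$ of degree $<m$ with the usual addition and multiplication $g\circ h=gh \bmod_r f$, the remainder of right division of $gh$ by $f$; under the hypotheses it is a proper semifield (finite nonassociative unital division algebra), and $L_f=S_f\setminus\{0\}$ is a loop under $\circ$, in which products are written by juxtaposition and powers $t^i$ ($i<m$) are the usual ones. $K$ is embedded in $S_f$ as the constant polynomials. A loop automorphism is a bijection $H:L_f\to L_f$ with $H(xy)=H(x)H(y)$. *)

(* Defs.v *)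
(* Twisted polynomial ring K[t;sigma] with carrier {poly K}
   (coefficient lists; addition is the usual termwise one) and the twisted
   product (sum b_i t^i)(sum c_j t^j) = sum b_i sigma^i(c_j) t^(i+j). *)
From HB Require Import structures.
From mathcomp Require Import all_boot all_order all_algebra all_field.
Set Implicit Arguments. Unset Strict Implicit. Unset Printing Implicit Defensive.
Import GRing.Theory.
Local Open Scope ring_scope.

Section Twisted.
Variable K : fieldType.
Variable sigma : K -> K.

Definition skew_mul (p q : {poly K}) : {poly K} :=
  \poly_(k < (size p + size q)%N)
     \sum_(i < k.+1) p`_i * iter i sigma q`_(k - i).

(* remainder of right division g = q f + r, deg r < deg f (f monic) *)
Fixpoint rmod_rec (f : {poly K}) (fuel : nat) (g : {poly K}) : {poly K} :=
  match fuel with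
  | 0 => g
  | k.+1 =>
      if (size g < size f)%N then g
      else rmod_rec f k
             (g - skew_mul (lead_coef g *: 'X^(size g - size f)) f)
  end.
Definition rmod (f g : {poly K}) : {poly K} := rmod_rec f (size g) g.

Definition fpoly (m : nat) (a : 'I_m -> K) : {poly K} :=
  'X^m - \sum_(i < m) (a i)%:P * 'X^i.

Definition skew_irreducible (f : {poly K}) : Prop :=
  ~ exists g h : {poly K},
      [/\ f = skew_mul g h, (size g < size f)%N & (size h < size f)%N].

(* right-invariant: the left ideal Rf is two-sided *)
Definition right_invariant (f : {poly K}) : Prop :=
  forall g h : {poly K}, exists h' : {poly K},
    skew_mul (skew_mul h f) g = skew_mul h' f.

Definition Sf_mem (f : {poly K}) (x : {poly K}) : bool :=
  (size x < size f)%N.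
Definition Lf_mem (f : {poly K}) (x : {poly K}) : bool :=
  (x != 0) && Sf_mem f x.
Definition Sf_mul (f g h : {poly K}) : {poly K} := rmod f (skew_mul g h).

Fixpoint Sf_pow (f x : {poly K}) (i : nat) : {poly K} :=
  match i with
  | 0 => 1
  | j.+1 => Sf_mul f x (Sf_pow f x j)
  end.

Definition loop_automorphism (f : {poly K}) (H : {poly K} -> {poly K}) : Prop :=
  [/\ {in Lf_mem f, forall x, Lf_mem f (H x)},
      {in Lf_mem f &, injective H},
      (forall y, Lf_mem f y -> exists2 x, Lf_mem f x & H x = y) &
      {in Lf_mem f &, forall x y, H (Sf_mul f x y) = Sf_mul f (H x) (H y)}].
End Twisted.

Definition unit_group_aut (K : fieldType) (tau : K -> K) : Prop :=
  [/\ (forall x : K, x != 0 -> tau x != 0),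
      {in predC1 0 &, injective tau},
      (forall y : K, y != 0 -> exists2 x, x != 0 & tau x = y) &
      {in predC1 0 &, forall x y, tau (x * y) = tau x * tau y}].

Definition aut_order (K : fieldType) (sigma : K -> K) (n : nat) : Prop :=
  (forall x, iter n sigma x = x) /\
  (forall j, (0 < j < n)%N -> exists x, iter j sigma x != x).

(* Main.v *)
Require Import Defs.
From HB Require Import structures.
From mathcomp Require Import all_boot all_order all_algebra all_field.
Import GRing.Theory.
Local Open Scope ring_scope.
From Stdlib Require Import Classical.
From mathcomp Require Import fingroup cyclic zify ring.

Module SkewAux.
Set Implicit Arguments. Unset Strict Implicit. Unset Printing Implicit Defensive.
Import GRing.Theory.
Local Open Scope ring_scope.

Lemma natlem1 (a b c d : nat) : (a + b <= c)%N -> (d < a)%N -> (b <= c - d)%N.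
Proof. lia. Qed.

Lemma cyc_gen (K : finFieldType) : exists2 g : K, g != 0 & forall x : K, x != 0 -> exists e : nat, x = g ^+ e.
Proof.
have /cyclicP [u Hu] := field_unit_group_cyclic [set: {unit K}]%G.
exists (FinRing.uval u); first by rewrite -unitfE; case: u {Hu}.
move=> x nx.
have ux : x \is a GRing.unit by rewrite unitfE.
have : FinRing.Unit ux \in <[u]>%g by rewrite -Hu inE.
case/cycleP => e He; exists e.
by rewrite -(FinRing.val_unitX) -He.
Qed.

Lemma comm_pow (K : finFieldType) (s t : K -> K) :
  (forall x, x != 0 -> s x != 0) -> (forall x, x != 0 -> t x != 0) ->
  (forall x y, x != 0 -> y != 0 -> s (x * y) = s x * s y) ->
  (forall x y, x != 0 -> y != 0 -> t (x * y) = t x * t y) ->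
  forall z, z != 0 -> t (s z) = s (t z).
Proof.
move=> s0 t0 sM tM.
have pw : forall (u : K -> K), (forall x, x != 0 -> u x != 0) ->
    (forall x y, x != 0 -> y != 0 -> u (x * y) = u x * u y) ->
    forall g, g != 0 -> forall e, u (g ^+ e) = u g ^+ e.
  move=> u u0 uM g g0; have u1 : u 1 = 1.
    have := uM 1 1 (oner_neq0 _) (oner_neq0 _); rewrite mul1r => h.
    by apply: (mulIf (u0 _ (oner_neq0 K))); rewrite mul1r -h.
  elim=> [|e IH]; first by rewrite !expr0.
  by rewrite !exprS uM ?expf_neq0 // IH.
have [g g0 hg] := cyc_gen K.
move=> z z0; have [e ->] := hg z z0.
have [a ha] := hg _ (s0 _ g0); have [b hb] := hg _ (t0 _ g0).
rewrite (pw s s0 sM g g0) ha -exprM (pw t t0 tM g g0) hb (pw t t0 tM g g0) hb.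
rewrite -!exprM (pw s s0 sM g g0) ha -!exprM.
by rewrite mulnCA.
Qed.

Section Skew.
Variable K : finFieldType.
Variable sigma : {rmorphism K -> K}.

Local Notation "p ** q" := (skew_mul sigma p q) (at level 40).
Local Notation si i := (iter i sigma).

Lemma siD i x y : si i (x + y) = si i x + si i y.
Proof. by elim: i => //= i ->; rewrite rmorphD. Qed.
Lemma siM i x y : si i (x * y) = si i x * si i y.
Proof. by elim: i => //= i ->; rewrite rmorphM. Qed.
Lemma siN i x : si i (- x) = - si i x.
Proof. by elim: i => //= i ->; rewrite rmorphN. Qed.
Lemma si0 i : si i 0 = 0.
Proof. by elim: i => //= i ->; rewrite rmorph0. Qed.
Lemma si1 i : si i 1 = 1.
Proof. by elim: i => //= i ->; rewrite rmorph1. Qed.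
Lemma si_eq0 i x : (si i x == 0) = (x == 0).
Proof. by elim: i => //= i <-; rewrite fmorph_eq0. Qed.
Lemma si_inj i : injective (si i).
Proof.
move=> x y /eqP; rewrite -subr_eq0 -siN -siD si_eq0 subr_eq0 => /eqP //.
Qed.
Lemma siB i x y : si i (x - y) = si i x - si i y.
Proof. by rewrite siD siN. Qed.
Lemma siZ i (x : K) k : si i (x ^+ k) = si i x ^+ k.
Proof. by elim: k => [|k IH]; rewrite ?si1 // !exprS siM IH. Qed.

Lemma coef_sm p q k :
  (p ** q)`_k = \sum_(i < k.+1) p`_i * si i q`_(k - i).
Proof.
rewrite /skew_mul coef_poly; case: ifP => // /negbT; rewrite -leqNgt => hk.
symmetry; apply: big1 => i _.
case: (ltnP i (size p)) => hi; last by rewrite nth_default // mul0r.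
rewrite [q`_(k - i)]nth_default ?si0 ?mulr0 //.
exact: (natlem1 hk hi).
Qed.

Lemma sm_addl p p' q : (p + p') ** q = p ** q + p' ** q.
Proof.
apply/polyP => k; rewrite coefD !coef_sm -big_split /=.
by apply: eq_bigr => i _; rewrite coefD mulrDl.
Qed.
Lemma sm_addr p q q' : p ** (q + q') = p ** q + p ** q'.
Proof.
apply/polyP => k; rewrite coefD !coef_sm -big_split /=.
by apply: eq_bigr => i _; rewrite coefD siD mulrDr.
Qed.
Lemma sm0l q : 0 ** q = 0.
Proof. by apply/polyP => k; rewrite coef_sm coef0 big1 // => i _; rewrite coef0 mul0r. Qed.
Lemma sm0r p : p ** 0 = 0.
Proof. by apply/polyP => k; rewrite coef_sm coef0 big1 // => i _; rewrite coef0 si0 mulr0. Qed.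
Lemma sm_oppl p q : (- p) ** q = - (p ** q).
Proof. by apply/eqP; rewrite -subr_eq0 opprK -sm_addl addNr sm0l. Qed.
Lemma sm_oppr p q : p ** (- q) = - (p ** q).
Proof. by apply/eqP; rewrite -subr_eq0 opprK -sm_addr addNr sm0r. Qed.
Lemma sm_subl p p' q : (p - p') ** q = p ** q - p' ** q.
Proof. by rewrite sm_addl sm_oppl. Qed.
Lemma sm_subr p q q' : p ** (q - q') = p ** q - p ** q'.
Proof. by rewrite sm_addr sm_oppr. Qed.
Lemma sm_scalel c p q : (c *: p) ** q = c *: (p ** q).
Proof.
apply/polyP => k; rewrite coefZ !coef_sm mulr_sumr.
by apply: eq_bigr => i _; rewrite coefZ mulrA.
Qed.
Lemma sm_suml (I : Type) (r : seq I) (P : pred I) (F : I -> {poly K}) q :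
  (\sum_(i <- r | P i) F i) ** q = \sum_(i <- r | P i) (F i ** q).
Proof.
by apply: (big_ind2 (fun a b => a ** q = b)) => [|a b c d <- <-|i _]; rewrite ?sm0l ?sm_addl.
Qed.
Lemma sm_sumr (I : Type) (r : seq I) (P : pred I) (F : I -> {poly K}) p :
  p ** (\sum_(i <- r | P i) F i) = \sum_(i <- r | P i) (p ** F i).
Proof.
by apply: (big_ind2 (fun a b => p ** a = b)) => [|a b c d <- <-|i _]; rewrite ?sm0r ?sm_addr.
Qed.

Lemma coef_smX c j q k :
  ((c *: 'X^j) ** q)`_k = if (j <= k)%N then c * si j q`_(k - j) else 0.
Proof.
rewrite coef_sm; case: leqP => hjk.
  rewrite (bigD1 (Ordinal (leq_ltn_trans hjk (ltnSn k)))) //= big1 ?addr0.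
    by rewrite coefZ coefXn eqxx mulr1.
  move=> i hi; rewrite coefZ coefXn; case: eqP => [hij|]; last by rewrite mulr0 mul0r.
  by case/eqP: hi; apply: val_inj.
apply: big1 => i _; rewrite coefZ coefXn; case: eqP => [hi|]; last by rewrite mulr0 mul0r.
by move: (ltn_ord i); rewrite hi ltnS leqNgt hjk.
Qed.

Lemma smXX c j d l : (c *: 'X^j) ** (d *: 'X^l) = (c * si j d) *: 'X^(j + l).
Proof.
apply/polyP => k; rewrite coef_smX !coefZ !coefXn.
case: leqP => hjk.
  have -> : (k - j == l)%N = (k == j + l)%N by apply/eqP/eqP; lia.
  by case: eqP => _ /=; rewrite ?(mulr1, mulr0, si0).
by case: eqP => [hk|]; rewrite ?mulr0 //; move: hjk; rewrite hk; lia.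
Qed.

Lemma smX_assoc c j q r : ((c *: 'X^j) ** q) ** r = (c *: 'X^j) ** (q ** r).
Proof.
rewrite -[q]coefK poly_def sm_sumr !sm_suml sm_sumr.
apply: eq_bigr => l _; rewrite smXX.
apply/polyP => k; rewrite !coef_smX.
case: (leqP (j + l) k) => h1; case: (leqP j k) => h2 //; try (case: (leqP l (k - j)) => h3).
- by rewrite siM mulrA -iterD subnDA addnC.
- exfalso; lia.
- exfalso; lia.
- exfalso; lia.
- exfalso; lia.
- by rewrite si0 mulr0.
Qed.

Lemma sm_assoc p q r : (p ** q) ** r = p ** (q ** r).
Proof.
rewrite -[p]coefK poly_def !sm_suml; apply: eq_bigr => j _.
by rewrite smX_assoc.
Qed.


Lemma coef_ne0_size (p : {poly K}) i : p`_i != 0 -> (i < size p)%N.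
Proof. by apply: contraR; rewrite -leqNgt => h; rewrite nth_default. Qed.

Lemma smCl c p : c%:P ** p = c *: p.
Proof.
have -> : c%:P = c *: 'X^0 by rewrite expr0 -alg_polyC.
by apply/polyP => k; rewrite coef_smX coefZ subn0.
Qed.

Lemma coef_smCr p c k : (p ** c%:P)`_k = p`_k * si k c.
Proof.
rewrite coef_sm big_ord_recr /= subnn coefC eqxx big1 ?add0r // => i _.
by rewrite coefC subn_eq0 leqNgt ltn_ord /= si0 mulr0.
Qed.

Lemma smXnr p s : p ** 'X^s = p * 'X^s.
Proof.
apply/polyP => k; rewrite coefMXn -[p]coefK poly_def sm_suml coef_sum.
rewrite [X in _ = if _ then _ else X]coef_sum.
case: ltnP => hk.
  apply: big1 => i _; rewrite -['X^s](scale1r) smXX coefZ coefXn.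
  by case: eqP => [e|]; rewrite ?mulr0 //; move: hk; rewrite e; lia.
apply: eq_bigr => i _; rewrite -['X^s](scale1r) smXX !coefZ !coefXn si1 mulr1.
by congr (_ * _%:R); apply/eqP/eqP; lia.
Qed.

Lemma size_sm_le p q : (size (p ** q) <= (size p + size q).-1)%N.
Proof.
apply/leq_sizeP => j hj; rewrite coef_sm; apply: big1 => i _.
case: (ltnP i (size p)) => hi; last by rewrite nth_default // mul0r.
rewrite [q`_(j - i)]nth_default ?si0 ?mulr0 //.
move: (ltn_ord i) hi hj; move: (nat_of_ord i) (size p) (size q) => a b c; lia.
Qed.

Lemma coef_sm_top p q :
  (p ** q)`_((size p).-1 + (size q).-1) = lead_coef p * si (size p).-1 (lead_coef q).
Proof.
rewrite coef_sm (bigD1 (Ordinal (leq_ltn_trans (leq_addr (size q).-1 (size p).-1) (ltnSn _)))) //=.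
rewrite addKn big1 ?addr0 // => i hi.
case: (ltnP i (size p)) => hp; last by rewrite nth_default // mul0r.
rewrite [q`_(_ - i)]nth_default ?si0 ?mulr0 //.
have h2 : (nat_of_ord i != (size p).-1) by apply: contra hi => /eqP e; apply/eqP/val_inj.
have h1 := ltn_ord i; move: (nat_of_ord i) h1 h2 hp => a h1 h2 hp; clear hi i.
move: (size p) (size q) h1 h2 hp => b c; lia.
Qed.

Lemma size_sm p q : p != 0 -> q != 0 -> size (p ** q) = (size p + size q).-1.
Proof.
move=> p0 q0; apply/eqP; rewrite eqn_leq size_sm_le /=.
have : (p ** q)`_((size p).-1 + (size q).-1) != 0.
  by rewrite coef_sm_top mulf_eq0 negb_or lead_coef_eq0 p0 si_eq0 lead_coef_eq0 q0.
move/coef_ne0_size; rewrite -size_poly_gt0 in p0; rewrite -size_poly_gt0 in q0.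
move: p0 q0; move: (size p) (size q) (size (p ** q)) => a b c; lia.
Qed.

Lemma div_step (p g : {poly K}) : g != 0 -> (size g <= size p)%N ->
  (size (p - ((lead_coef p / si (size p - size g) (lead_coef g)) *: 'X^(size p - size g)) ** g)%R < size p)%N.
Proof.
move=> g0 hs; set d := (size p - size g)%N.
have gs : (0 < size g)%N by rewrite size_poly_gt0.
have ps : (0 < size p)%N by apply: leq_trans hs.
have lg : si d (lead_coef g) != 0 by rewrite si_eq0 lead_coef_eq0.
suff : (size (p - ((lead_coef p / si d (lead_coef g)) *: 'X^d) ** g)%R <= (size p).-1)%N.
  by move=> h; apply: leq_ltn_trans h _; rewrite ltn_predL.
apply/leq_sizeP => j hj; rewrite coefB coef_smX.
have -> : (d <= j)%N by rewrite /d; lia.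
case: (ltnP (size p).-1 j) => hj2.
  rewrite !nth_default ?si0 ?mulr0 ?subr0 //; rewrite /d;
  by move: hj2 ps gs hs; move: (size p) (size g) => a b; lia.
have ej : j = (size p).-1 by move: hj2 hj; move: (size p) => a; lia.
have -> : (j - d = (size g).-1)%N by rewrite ej /d; move: ps gs hs; move: (size p) (size g) => a b; lia.
by rewrite -lead_coefE ej -lead_coefE divfK // subrr.
Qed.

Lemma div_exists (g p : {poly K}) : g != 0 -> exists s r, p = s ** g + r /\ (size r < size g)%N.
Proof.
move=> g0; move: {2}(size p) (leqnn (size p)) => N; elim: N p => [|N IH] p hp.
  exists 0, p; rewrite sm0l add0r; split => //.
  by move: hp; rewrite leqn0 size_poly_eq0 => /eqP ->; rewrite size_poly0 size_poly_gt0.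
case: (ltnP (size p) (size g)) => hs; first by exists 0, p; rewrite sm0l add0r.
have := div_step g0 hs; set c := (_ / _); set d := (size p - size g)%N => h.
have hp' : (size (p - (c *: 'X^d) ** g)%R <= N)%N by rewrite -ltnS (leq_trans h hp).
have [s [r [e hr]]] := IH _ hp'.
by exists (s + c *: 'X^d), r; rewrite sm_addl addrAC -e subrK.
Qed.

Lemma size_subr_lt (p q : {poly K}) n : (size p < n)%N -> (size q < n)%N -> (size (p - q)%R < n)%N.
Proof.
move=> hp hq; apply: leq_ltn_trans (size_polyD _ _) _.
by rewrite size_polyN gtn_max hp hq.
Qed.
Lemma size_addr_lt (p q : {poly K}) n : (size p < n)%N -> (size q < n)%N -> (size (p + q)%R < n)%N.
Proof.
move=> hp hq; apply: leq_ltn_trans (size_polyD _ _) _.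
by rewrite gtn_max hp hq.
Qed.

Variable f : {poly K}.
Hypothesis fmon : lead_coef f = 1.

Lemma f_neq0 : f != 0.
Proof. by rewrite -lead_coef_eq0 fmon oner_neq0. Qed.

Lemma rmod_recP N (g : {poly K}) : (size g <= N)%N ->
  exists Q, g = Q ** f + rmod_rec sigma f N g /\ (size (rmod_rec sigma f N g) < size f)%N.
Proof.
elim: N g => [|N IH] g hg /=.
  move: hg; rewrite leqn0 size_poly_eq0 => /eqP ->.
  exists 0; rewrite /= sm0l add0r; split => //.
  by rewrite size_poly0 size_poly_gt0 f_neq0.
case: ltnP => hs; first by exists 0; rewrite sm0l add0r.
have := div_step f_neq0 hs; rewrite fmon si1 divr1 => h.
have [Q [e hr]] := IH _ (leq_trans h hg).
exists (Q + lead_coef g *: 'X^(size g - size f)); split => //.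
by rewrite sm_addl addrAC -e subrK.
Qed.

Lemma rmodP (g : {poly K}) : exists Q, g = Q ** f + rmod sigma f g /\ (size (rmod sigma f g) < size f)%N.
Proof. exact: rmod_recP. Qed.

Lemma rmod_unique (g Q r : {poly K}) : g = Q ** f + r -> (size r < size f)%N -> rmod sigma f g = r.
Proof.
move=> e hr; have [Q' [e' hr']] := rmodP g.
have h : (Q - Q') ** f = rmod sigma f g - r.
  have h0 : Q ** f + r = Q' ** f + rmod sigma f g by rewrite -e -e'.
  rewrite sm_subl; apply/eqP; rewrite -subr_eq0; apply/eqP.
  by transitivity ((Q ** f + r) - (Q' ** f + rmod sigma f g)); [ring | rewrite h0 subrr].
have hs : (size ((Q - Q') ** f) < size f)%N by rewrite h size_subr_lt.
case: (eqVneq (Q - Q') 0) => hQ.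
  by apply/eqP; rewrite -subr_eq0 -h hQ sm0l.
move: hs; rewrite size_sm // ?f_neq0 //.
by move: hQ; rewrite -size_poly_gt0; move: (size (Q - Q')) (size f) => a b; lia.
Qed.

Lemma rmod_small (g : {poly K}) : (size g < size f)%N -> rmod sigma f g = g.
Proof. by move=> h; apply: (rmod_unique (Q := 0)); rewrite ?sm0l ?add0r. Qed.

Lemma rmod_size (g : {poly K}) : (size (rmod sigma f g) < size f)%N.
Proof. by have [Q [_ h]] := rmodP g. Qed.

Lemma rmod_add (g h : {poly K}) : rmod sigma f (g + h) = rmod sigma f g + rmod sigma f h.
Proof.
have [Q [e _]] := rmodP g; have [Q' [e' _]] := rmodP h.
apply: (rmod_unique (Q := Q + Q')); last by rewrite size_addr_lt ?rmod_size.
by rewrite {1}e {1}e' sm_addl addrACA.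
Qed.

Lemma rmod_opp (g : {poly K}) : rmod sigma f (- g) = - rmod sigma f g.
Proof.
have [Q [e _]] := rmodP g.
apply: (rmod_unique (Q := - Q)); last by rewrite size_polyN rmod_size.
by rewrite {1}e sm_oppl opprD.
Qed.

Lemma rmod_sub (g h : {poly K}) : rmod sigma f (g - h) = rmod sigma f g - rmod sigma f h.
Proof. by rewrite rmod_add rmod_opp. Qed.

Lemma rmod_scale c (g : {poly K}) : rmod sigma f (c *: g) = c *: rmod sigma f g.
Proof.
have [Q [e _]] := rmodP g.
apply: (rmod_unique (Q := c *: Q)); last by rewrite (leq_ltn_trans (size_scale_leq _ _)) ?rmod_size.
by rewrite {1}e scalerDr sm_scalel.
Qed.

Lemma rmod_mulf (Q : {poly K}) : rmod sigma f (Q ** f) = 0.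
Proof. by apply: (rmod_unique (Q := Q)); rewrite ?addr0 // size_poly0 size_poly_gt0 f_neq0. Qed.

Lemma rmod_mulfD (Q g : {poly K}) : rmod sigma f (Q ** f + g) = rmod sigma f g.
Proof. by rewrite rmod_add rmod_mulf add0r. Qed.

Lemma rmod_id (g : {poly K}) : rmod sigma f (rmod sigma f g) = rmod sigma f g.
Proof. by rewrite rmod_small // rmod_size. Qed.


Hypothesis firr : skew_irreducible sigma f.

Lemma rmod_mull (h p : {poly K}) : rmod sigma f (h ** p) = rmod sigma f (h ** rmod sigma f p).
Proof.
have [Q [e _]] := rmodP p.
by rewrite {1}e sm_addr -sm_assoc rmod_mulfD.
Qed.

Lemma sm1l (p : {poly K}) : 1 ** p = p.
Proof. by rewrite -polyC1 smCl scale1r. Qed.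
Lemma sm1r (p : {poly K}) : p ** 1 = p.
Proof. by rewrite -(expr0 'X) smXnr expr0 mulr1. Qed.

Definition inN (y p : {poly K}) := exists u, rmod sigma f (u ** y) = rmod sigma f p.

Lemma inN_sub (y p q : {poly K}) : inN y p -> inN y q -> inN y (p - q).
Proof.
move=> [u hu] [v hv]; exists (u - v).
by rewrite sm_subl !rmod_sub hu hv.
Qed.
Lemma inN_mull (y h p : {poly K}) : inN y p -> inN y (h ** p).
Proof.
move=> [u hu]; exists (h ** u).
by rewrite sm_assoc rmod_mull hu -rmod_mull.
Qed.

Lemma inN_const (y : {poly K}) : y != 0 -> (size y < size f)%N ->
  exists2 c : K, c != 0 & inN y c%:P.
Proof.
move=> y0 ys.
suff H : forall n (g : {poly K}), (size g <= n)%N -> g != 0 -> (size g <= size y)%N -> inN y g ->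
   exists2 c : K, c != 0 & inN y c%:P.
  by apply: (H _ y (leqnn _) y0 (leqnn _)); exists 1; rewrite sm1l.
elim=> [|n IH] g hg g0 gy hN.
  by move: g0; rewrite -size_poly_gt0; move: hg; move: (size g) => a; lia.
have [u [r [e hr]]] := div_exists f g0.
have rN : inN y r.
  have -> : r = f - u ** g by rewrite e addrC addKr.
  apply: inN_sub; last exact: inN_mull.
  exists 0; rewrite sm0l rmod_small ?size_poly0 ?size_poly_gt0 ?f_neq0 //.
  by have := rmod_mulf 1; rewrite sm1l => ->.
case: (eqVneq r 0) => r0.
  have fug : f = u ** g by rewrite e r0 addr0.
  case: (leqP (size g) 1) => gs.
    exists (g`_0).
      have s1 : size g = 1%N by move: gs g0; rewrite -size_poly_gt0; move: (size g) => a; lia.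
      by move: g0; rewrite -lead_coef_eq0 lead_coefE s1.
    by rewrite -size1_polyC.
  exfalso; apply: firr; exists u, g; split => //.
    have u0 : u != 0 by apply: contraNneq f_neq0 => hu; rewrite fug hu sm0l.
    move: (size_sm u0 g0); rewrite -fug => hf.
    by move: hf gs; move: (size u) (size g) (size f) => a b c; lia.
  by apply: leq_ltn_trans gy ys.
apply: (IH r) => //.
  by move: hr hg; move: (size r) (size g) => a b; lia.
by apply: leq_trans (ltnW hr) gy.
Qed.

Lemma inN_all (y : {poly K}) : y != 0 -> (size y < size f)%N -> forall p, inN y p.
Proof.
move=> y0 ys p; have [c c0 hc] := inN_const y0 ys.
have h1 : inN y 1.
  have e : c^-1 *: c%:P = 1 by rewrite -mul_polyC -polyCM mulVf ?polyC1.
  by have := inN_mull (c^-1)%:P hc; rewrite smCl e.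
by rewrite -[p]sm1r; apply: inN_mull.
Qed.

Lemma poly_trunc (r : {poly K}) d : (size r <= d)%N -> \poly_(i < d) r`_i = r.
Proof.
move=> h; apply/polyP => i; rewrite coef_poly; case: ltnP => // hi.
by rewrite nth_default // (leq_trans h hi).
Qed.

Lemma nozd (x y : {poly K}) : x != 0 -> y != 0 -> (size x < size f)%N -> (size y < size f)%N ->
  rmod sigma f (x ** y) != 0.
Proof.
move=> x0 y0 xs ys; apply/negP => /eqP hxy.
have claim : forall p, exists2 r : {poly K}, (size r < size x)%N & rmod sigma f (p ** y) = rmod sigma f (r ** y).
  move=> p; have [s [r [e hr]]] := div_exists p x0.
  exists r => //; rewrite e sm_addl sm_assoc rmod_add rmod_mull hxy sm0r.
  by rewrite rmod_small ?size_poly0 ?size_poly_gt0 ?f_neq0 // add0r.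
pose M := (size f).-1; pose d := (size x).-1.
have fs : (0 < size f)%N by rewrite size_poly_gt0 f_neq0.
have x0' : (0 < size x)%N by rewrite size_poly_gt0.
have dM : (d < M)%N by rewrite /d /M; move: xs fs x0'; move: (size x) (size f) => a b; lia.
pose P (w : {ffun 'I_M -> K}) : {poly K} := \poly_(i < M) oapp w 0 (insub i).
pose Phi (v : {ffun 'I_d -> K}) := rmod sigma f ((\poly_(i < d) oapp v 0 (insub i)) ** y).
have hex : forall w, exists v, Phi v == P w.
  move=> w; have [u hu] := inN_all y0 ys (P w).
  have [r hr e] := claim u.
  exists [ffun i : 'I_d => r`_i]; apply/eqP.
  rewrite /Phi (_ : \poly_(i < d) _ = r); last first.
    by rewrite -[RHS](poly_trunc (d := d)); [apply: eq_poly => i hi; rewrite insubT /= ffunE | rewrite /d; move: hr; move: (size r) (size x) => a b; lia].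
  rewrite -e hu rmod_small //; apply: leq_ltn_trans (size_poly _ _) _.
  by rewrite /M prednK.
pose G w := odflt [ffun => 0] [pick v | Phi v == P w].
have GP : forall w, Phi (G w) = P w.
  move=> w; rewrite /G; case: pickP => [v /eqP //|h].
  by have [v hv] := hex w; rewrite h in hv.
have Ginj : injective G.
  move=> w w' e; have : P w = P w' by rewrite -!GP e.
  move/polyP => h; apply/ffunP => i; have := h i; rewrite /P !coef_poly ltn_ord.
  by rewrite valK.
have := leq_card G Ginj; rewrite !card_ffun !card_ord.
by rewrite leqNgt ltn_exp2l ?dM // finNzRing_gt1.
Qed.

Local Notation Sf := (Sf_mul sigma f).
Local Notation L := (Lf_mem f).

Lemma LfP (x : {poly K}) : L x = (x != 0) && (size x < size f)%N.
Proof. by []. Qed.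

Lemma Lf_mul (x y : {poly K}) : L x -> L y -> L (Sf x y).
Proof.
rewrite !LfP => /andP [x0 xs] /andP [y0 ys]; apply/andP; split.
  exact: nozd.
exact: rmod_size.
Qed.

Definition nuc (x : {poly K}) := forall y z, L y -> L z -> Sf (Sf x y) z = Sf x (Sf y z).

Lemma Sf_const c (y : {poly K}) : (size y < size f)%N -> Sf c%:P y = c *: y.
Proof.
move=> ys; rewrite /Sf_mul smCl rmod_small //.
by apply: leq_ltn_trans (size_scale_leq _ _) ys.
Qed.

Lemma nuc_const c : nuc c%:P.
Proof.
move=> y z; rewrite !LfP => /andP [_ ys] /andP [_ zs].
rewrite Sf_const // Sf_const ?rmod_size //.
by rewrite /Sf_mul sm_scalel rmod_scale.
Qed.

Lemma nonRI : ~ right_invariant sigma f ->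
  exists2 z : {poly K}, (size z < size f)%N & rmod sigma f (f ** z) != 0.
Proof.
move=> hnri; case: (classic (exists2 z : {poly K}, (size z < size f)%N & rmod sigma f (f ** z) != 0)) => // hno.
exfalso; apply: hnri => g h.
have hz : forall z : {poly K}, (size z < size f)%N -> rmod sigma f (f ** z) = 0.
  by move=> z zs; apply/eqP; apply: contraT => hz; case: hno; exists z.
have [s [r [e hr]]] := div_exists g f_neq0.
have [Q [eQ _]] := rmodP (f ** r); rewrite hz // addr0 in eQ.
exists (h ** (f ** s + Q)).
by rewrite sm_assoc e sm_addr -sm_assoc eQ -sm_addl sm_assoc.
Qed.

Lemma nuc_nonconst (x z : {poly K}) : L x -> (1 < size x)%N ->
  (size z < size f)%N -> rmod sigma f (f ** z) != 0 -> z != 0 -> ~ nuc x.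
Proof.
rewrite LfP => /andP [x0 xs] x1 zs hfz z0 hn.
pose s := (size f - size x)%N.
pose y : {poly K} := 'X^s.
have yL : L y.
  rewrite LfP -size_poly_gt0 size_polyXn /=.
  by rewrite /s; move: xs x1; move: (size x) (size f) => a b; lia.
have zL : L z by rewrite LfP z0 zs.
pose c := lead_coef x.
have c0 : c != 0 by rewrite lead_coef_eq0.
pose r := x * 'X^s - c *: f.
have rs : (size r < size f)%N.
  have fs : (0 < size f)%N by rewrite size_poly_gt0 f_neq0.
  suff : (size r <= (size f).-1)%N by move: fs; move: (size f) (size r) => a b; lia.
  apply/leq_sizeP => j hj; rewrite coefB coefMXn coefZ.
  have -> : (j < s)%N = false by apply/negbTE; rewrite -leqNgt /s; move: hj x1 xs; move: (size x) (size f) => a b; lia.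
  case: (ltnP (size f).-1 j) => hj2.
    rewrite !nth_default ?mulr0 ?subr0 //; first by move: hj2 fs; move: (size f) => a; lia.
    by rewrite /s; move: hj2 xs x1 fs; move: (size x) (size f) => a b; lia.
  have ej : j = (size f).-1 by move: hj2 hj; move: (size f) => a; lia.
  have -> : (j - s)%N = (size x).-1 by rewrite ej /s; move: xs x1; move: (size x) (size f) => a b; lia.
  by rewrite -lead_coefE ej -lead_coefE fmon mulr1 subrr.
have exy : Sf x y = r.
  rewrite /Sf_mul smXnr; apply: (rmod_unique (Q := c%:P)) => //.
  by rewrite smCl /r addrC subrK.
have := hn y z yL zL; rewrite exy /Sf_mul.
rewrite -rmod_mull /r -smXnr sm_subl sm_scalel rmod_sub rmod_scale sm_assoc.
move/eqP; rewrite /y -subr_eq0 addrAC subrr add0r oppr_eq0 scale_poly_eq0.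
by rewrite (negbTE c0) (negbTE hfz).
Qed.

Variable H : {poly K} -> {poly K}.
Hypothesis hH : loop_automorphism sigma f H.

Lemma HL x : L x -> L (H x).
Proof. by case: hH => h _ _ _; apply: h. Qed.
Lemma Hinj x y : L x -> L y -> H x = H y -> x = y.
Proof. by case: hH => _ h _ _; apply: h. Qed.
Lemma Hsurj y : L y -> exists2 x, L x & H x = y.
Proof. by case: hH => _ _ h _; apply: h. Qed.
Lemma Hmul x y : L x -> L y -> H (Sf x y) = Sf (H x) (H y).
Proof. by case: hH => _ _ _ h; apply: h. Qed.

Lemma nuc_H x : L x -> nuc x <-> nuc (H x).
Proof.
move=> xL; split => hn.
  move=> y' z' /Hsurj [y yL <-] /Hsurj [w wL <-].
  rewrite -Hmul // -Hmul ?Lf_mul // hn // Hmul ?Lf_mul // Hmul //.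
move=> y z yL zL; apply: Hinj; rewrite ?Lf_mul //.
rewrite Hmul ?Lf_mul // Hmul // hn ?HL // -Hmul // -Hmul ?Lf_mul //.
Qed.

Hypothesis hnri : ~ right_invariant sigma f.
Hypothesis fs3 : (2 < size f)%N.

Lemma constL c : c != 0 -> L c%:P.
Proof. by move=> c0; rewrite LfP polyC_eq0 c0 size_polyC c0 (leq_trans _ fs3). Qed.

Lemma nuc_small x : L x -> nuc x -> (size x <= 1)%N.
Proof.
move=> xL hn; rewrite leqNgt; apply/negP => x1.
have [z zs hz] := nonRI hnri.
have z0 : z != 0 by apply: contraNneq hz => ->; rewrite sm0r rmod_small ?size_poly0 ?size_poly_gt0 ?f_neq0.
exact: (nuc_nonconst xL x1 zs hz z0 hn).
Qed.

Lemma small_const x : L x -> (size x <= 1)%N -> x`_0 != 0 /\ x = (x`_0)%:P.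
Proof.
rewrite LfP => /andP [x0 _] x1; split; last exact: size1_polyC.
have s1 : size x = 1%N by move: x1 x0; rewrite -size_poly_gt0; move: (size x) => a; lia.
by move: x0; rewrite -lead_coef_eq0 lead_coefE s1.
Qed.

Lemma H_const c : c != 0 -> exists2 c', c' != 0 & H c%:P = c'%:P.
Proof.
move=> c0; have cL := constL c0.
have hn : nuc (H c%:P) by apply/(nuc_H cL)/nuc_const.
have [h1 h2] := small_const (HL cL) (nuc_small (HL cL) hn).
by exists (H c%:P)`_0.
Qed.

Lemma H_const_surj c' : c' != 0 -> exists2 c, c != 0 & H c%:P = c'%:P.
Proof.
move=> c0; have [x xL hx] := Hsurj (constL c0).
have hn : nuc x by apply/(nuc_H xL); rewrite hx; apply: nuc_const.
have [h1 h2] := small_const xL (nuc_small xL hn).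
by exists x`_0; rewrite -?h2.
Qed.

Definition tau (z : K) : K := (H z%:P)`_0.

Lemma Htau z : z != 0 -> H z%:P = (tau z)%:P.
Proof. by move=> z0; have [c' _ e] := H_const z0; rewrite /tau e coefC. Qed.

Lemma tau_neq0 z : z != 0 -> tau z != 0.
Proof. by move=> z0; have [c' c0 e] := H_const z0; rewrite /tau e coefC. Qed.

Lemma Sf_CC c d : Sf c%:P d%:P = (c * d)%:P.
Proof.
rewrite Sf_const ?size_polyC ?(leq_trans _ fs3) ?(leq_ltn_trans (leq_b1 _)) //.
by rewrite -mul_polyC polyCM.
Qed.

Lemma tau_aut : unit_group_aut tau.
Proof.
split.
- exact: tau_neq0.
- move=> x y; rewrite !inE => x0 y0 e.
  by apply/polyC_inj/Hinj; rewrite ?constL // !Htau // e.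
- move=> y y0; have [c c0 e] := H_const_surj y0.
  by exists c => //; rewrite /tau e coefC.
- move=> x y; rewrite !inE => x0 y0.
  have := Hmul (constL x0) (constL y0).
  rewrite Sf_CC !Htau ?mulf_neq0 // Sf_CC.
  by move/polyC_inj.
Qed.

Lemma tau_sigma z : z != 0 -> tau (sigma z) = sigma (tau z).
Proof.
apply: comm_pow.
- by move=> x; rewrite fmorph_eq0.
- exact: tau_neq0.
- by move=> x y _ _; rewrite rmorphM.
- by case: tau_aut => _ _ _ h x y x0 y0; apply: h; rewrite inE.
Qed.

Lemma XL : L 'X.
Proof. by rewrite LfP polyX_eq0 size_polyX. Qed.

Lemma Sf_smallr (Y : {poly K}) c : (size Y < size f)%N -> Sf Y c%:P = \poly_(k < size Y) (Y`_k * si k c).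
Proof.
move=> Ys; rewrite /Sf_mul rmod_small.
  apply/polyP => k; rewrite coef_smCr coef_poly; case: ltnP => // h.
  by rewrite nth_default // mul0r.
apply: leq_ltn_trans Ys; apply/leq_sizeP => j hj.
by rewrite coef_smCr nth_default // mul0r.
Qed.

Lemma Sf_Xc z : Sf 'X z%:P = sigma z *: 'X.
Proof.
rewrite Sf_smallr ?size_polyX //; apply/polyP => k.
rewrite coef_poly coefZ coefX.
case: ltnP => hk; last by rewrite (_ : (k == 1)%N = false) ?mulr0 //; apply/negbTE; move: hk; case: k => // [[]].
by case: eqP => [->|]; rewrite ?mul1r ?mulr1 ?mul0r ?mulr0.
Qed.

Lemma HX_shape n (hn1 : (1 < n)%N) (hord : aut_order sigma n) (hmn : ((size f).-2 <= n)%N) :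
  exists2 k : K, k != 0 & H 'X = k%:P * 'X.
Proof.
set Y := H 'X; have YL : L Y := HL XL.
have Ys : (size Y < size f)%N by move: YL; rewrite LfP => /andP [].
have key : forall z, z != 0 -> forall k, Y`_k * si k (tau z) = tau (sigma z) * Y`_k.
  move=> z z0 k.
  have sz0 : sigma z != 0 by rewrite fmorph_eq0.
  have e : Sf 'X z%:P = Sf (sigma z)%:P 'X by rewrite Sf_Xc Sf_const ?size_polyX.
  have := congr1 H e; rewrite !Hmul ?XL ?constL // !Htau // Sf_smallr // Sf_const //.
  move/polyP => /(_ k); rewrite coef_poly coefZ; case: ltnP => // hk.
  by rewrite nth_default // mul0r mulr0.
have key2 : forall k, Y`_k != 0 -> forall w, si k w = sigma w.
  move=> k yk w; case: (eqVneq w 0) => [->|w0]; first by rewrite si0 rmorph0.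
  case: tau_aut => _ _ hs _; have [z z0 hz] := hs w w0.
  have := key z z0 k; rewrite tau_sigma // hz mulrC => /(mulIf yk) //.
have Y0 : forall k, k != 1%N -> Y`_k = 0.
  move=> k k1; apply/eqP; apply: contraT => yk.
  have h := key2 k yk.
  case: k k1 yk h => [|[|k]] // _ yk h.
    have [x hx] := (proj2 hord) 1%N hn1.
    by move: hx; rewrite /= -(h x) /= eqxx.
  have kY : (k.+2 < size Y)%N by apply: coef_ne0_size.
  have [x hx] := (proj2 hord) k.+1 (ltac:(apply/andP; split => //; move: kY Ys hmn; move: (size Y) (size f) => a b; lia)).
  move: hx; have := h x; rewrite iterS => /fmorph_inj ->.
  by rewrite eqxx.
exists Y`_1.
  apply: contraTneq YL => y1; rewrite LfP negb_and; apply/orP; left; apply/negPn/eqP.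
  by apply/polyP => k; rewrite coef0; case: (eqVneq k 1%N) => [->|/Y0] //.
rewrite mul_polyC; apply/polyP => k; rewrite coefZ coefX.
by case: (eqVneq k 1%N) => [->|/Y0 ->]; rewrite ?mulr1 ?mulr0.
Qed.

Local Notation Sp := (Sf_pow sigma f).

Lemma fs1 : (0 < (size f).-1)%N.
Proof. by move: fs3; move: (size f) => a; lia. Qed.

Lemma SfpowX i : (i < (size f).-1)%N -> Sp 'X i = 'X^i.
Proof.
elim: i => [|i IH] hi /=; first by rewrite expr0.
rewrite IH; last by move: hi; move: (size f) => a; lia.
rewrite /Sf_mul smXnr -exprS rmod_small // size_polyXn.
by move: hi; move: (size f) => a; lia.
Qed.

Lemma XnL i : (i < (size f).-1)%N -> L 'X^i.
Proof.
move=> hi; rewrite LfP -size_poly_gt0 size_polyXn /=.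
by move: hi; move: (size f) => a; lia.
Qed.

Lemma prodS (k : K) i : \prod_(l < i.+1) si l k = k * sigma (\prod_(l < i) si l k).
Proof.
rewrite big_ord_recl /= rmorph_prod; congr (_ * _).
 
Qed.

Lemma smX1 (c d : K) i : (c *: 'X) ** (d *: 'X^i) = (c * sigma d) *: 'X^(i.+1).
Proof. by have := smXX c 1 d i; rewrite expr1 add1n. Qed.

Lemma Sf_mono (c d : K) i : (i.+2 < size f)%N ->
  Sf (c%:P * 'X) (d%:P * 'X^i) = (c * sigma d)%:P * 'X^(i.+1).
Proof.
move=> hi; rewrite /Sf_mul !mul_polyC smX1 rmod_small //.
by rewrite (leq_ltn_trans (size_scale_leq _ _)) // size_polyXn.
Qed.

Lemma Sfpow_kX (k : K) i : (i < (size f).-1)%N ->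
  Sp (k%:P * 'X) i = (\prod_(l < i) si l k)%:P * 'X^i.
Proof.
elim: i => [|i IH] hi /=; first by rewrite big_ord0 expr0 mul1r.
rewrite IH; last by move: hi; move: (size f) => a; lia.
rewrite Sf_mono ?prodS //; by move: hi; move: (size f) => a; lia.
Qed.

Lemma Sfpow_kX_top (k : K) :
  Sp (k%:P * 'X) (size f).-1 = (\prod_(l < (size f).-1) si l k)%:P * Sp 'X (size f).-1.
Proof.
have := fs1; case E: (size f).-1 => [|j] // _.
have hj : (j < (size f).-1)%N by rewrite E.
rewrite /= Sfpow_kX // SfpowX // /Sf_mul !mul_polyC smX1 smXnr -exprS.
by rewrite rmod_scale prodS.
Qed.

Lemma H_pow i : (0 < i <= (size f).-1)%N -> H (Sp 'X i) = Sp (H 'X) i.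
Proof.
case: i => [|i] // /andP [_ hi].
elim: i hi => [|i IH] hi.
  rewrite /= /Sf_mul !sm1r rmod_small ?rmod_small //.
    by move: (HL XL); rewrite LfP => /andP [].
  by rewrite size_polyX.
have h1 : (i.+1 <= (size f).-1)%N by move: hi; move: ((size f).-1) => a; lia.
have h2 : L (Sp 'X i.+1) by rewrite SfpowX ?XnL.
by rewrite [Sp 'X _]/= Hmul ?XL // IH.
Qed.

Lemma Sp_top (S : {poly K}) : f = 'X^((size f).-1) - S -> (size S < size f)%N ->
  Sp 'X (size f).-1 = S.
Proof.
move=> ef Ss; have := fs1; case E: (size f).-1 => [|j] // _.
have hj : (j < (size f).-1)%N by rewrite E.
rewrite /= SfpowX // /Sf_mul smXnr -exprS.
apply: (rmod_unique (Q := 1)) => //.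
by rewrite sm1l {1}ef E subrK.
Qed.

Lemma main_sec m (hm : size f = m.+1) (S : {poly K}) (hS : Sp 'X m = S) :
  let cprod k i := \prod_(l < i) iter l sigma k in
  (forall c : K, c != 0 -> exists2 c' : K, c' != 0 & H c%:P = c'%:P) /\
  (forall c' : K, c' != 0 -> exists2 c : K, c != 0 & H c%:P = c'%:P) /\
  exists tau : K -> K,
    [/\ unit_group_aut tau,
        (forall z : K, z != 0 -> H z%:P = (tau z)%:P) &
        (forall n, (1 < n)%N -> aut_order sigma n -> (m - 1 <= n)%N ->
         exists2 k : K, k != 0 &
           [/\ H 'X = k%:P * 'X,
               (forall (i : nat) (z : K), (1 <= i <= m - 1)%N -> z != 0 ->
                  H (z%:P * 'X^i) = Sf (H z%:P) (Sp (H 'X) i)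
                  /\ Sp (H 'X) i = Sp (k%:P * 'X) i
                  /\ H (z%:P * 'X^i) = (tau z * cprod k i)%:P * 'X^i),
               (forall i : nat, (1 <= i <= m)%N ->
                  H (Sp 'X i) = Sp (H 'X) i
                  /\ Sp (H 'X) i = Sp (k%:P * 'X) i
                  /\ Sp (k%:P * 'X) i = (cprod k i)%:P * Sp 'X i) &
               H S = (cprod k m)%:P * S])].
Proof.
move=> cprod; split; first exact: H_const.
split; first exact: H_const_surj.
have em : (size f).-1 = m by rewrite hm.
have m2 : (2 <= m)%N by move: fs3; rewrite hm.
exists tau; split; [exact: tau_aut | exact: Htau |].
move=> n hn1 hord hmn.
have hmn' : ((size f).-2 <= n)%N by rewrite hm /= -subn1.
have [k k0 hk] := HX_shape hn1 hord hmn'.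
exists k => //.
have pw : forall i, (1 <= i <= m)%N -> H (Sp 'X i) = Sp (H 'X) i.
  by move=> i hi; apply: H_pow; rewrite em.
split => //.
- move=> i z /andP [i1 im] z0.
  have il : (i < (size f).-1)%N by rewrite em; move: im m2; clear; lia.
  have xs : (size ('X^i : {poly K}) < size f)%N by move: (XnL il); rewrite LfP => /andP [].
  have e1 : z%:P * 'X^i = Sf z%:P (Sp 'X i) by rewrite SfpowX // Sf_const ?mul_polyC.
  have a1 : H (z%:P * 'X^i) = Sf (H z%:P) (Sp (H 'X) i).
    rewrite e1 Hmul ?constL ?pw //; last by rewrite SfpowX ?XnL.
    by rewrite i1 /= (leq_trans _ (leq_pred m)) // -subn1.
  split => //; split; first by rewrite hk.
  rewrite a1 hk Htau // Sfpow_kX // Sf_const; last first.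
    by rewrite mul_polyC (leq_ltn_trans (size_scale_leq _ _)).
  by rewrite !mul_polyC scalerA.
- move=> i /andP [i1 im]; split; first by apply: pw; rewrite i1.
  split; first by rewrite hk.
  case: (ltnP i m) => him.
    by rewrite Sfpow_kX ?SfpowX ?em.
  have -> : i = (size f).-1 by rewrite em; apply/eqP; rewrite eqn_leq im.
  by rewrite Sfpow_kX_top.
- have hm1 : (1 <= m <= m)%N by rewrite leqnn (leq_trans _ m2).
  by rewrite -hS (pw _ hm1) hk -em Sfpow_kX_top.
Qed.

End Skew.

End SkewAux.
Import SkewAux.
Unset Implicit Arguments. Set Strict Implicit.

Lemma fpoly_facts (K : fieldType) (m : nat) (a : 'I_m -> K) :
  (size (\sum_(i < m) (a i)%:P * 'X^i)%R <= m)%N /\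
  lead_coef (fpoly a) = 1 /\ size (fpoly a) = m.+1.
Proof.
have hS : (size (\sum_(i < m) (a i)%:P * 'X^i)%R <= m)%N.
  apply/leq_sizeP => j hj; rewrite coef_sum big1 // => i _.
  rewrite coefCM coefXn; case: eqP => [e|]; last by rewrite mulr0.
  by move: (ltn_ord i) hj; rewrite -e; lia.
have lt : (size (- \sum_(i < m) (a i)%:P * 'X^i)%R < size ('X^m : {poly K}))%N.
  by rewrite size_polyN size_polyXn ltnS.
split => //; rewrite /fpoly; split.
  by rewrite lead_coefDl // lead_coefXn.
by rewrite size_polyDl // size_polyXn.
Qed.

Theorem mainTheorem1 (K : finFieldType) (q n : nat)
  (sigma : {rmorphism K -> K})
  (hn : (1 < n)%N) (hord : aut_order sigma n)
  (hK : #|K| = (q ^ n)%N) (hF : #|[set x : K | sigma x == x]| = q)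
  (m : nat) (hm : (2 <= m)%N) (a : 'I_m -> K)
  (hirr : skew_irreducible sigma (fpoly a))
  (hnri : ~ right_invariant sigma (fpoly a))
  (H : {poly K} -> {poly K})
  (hH : loop_automorphism sigma (fpoly a) H) :
  let f := fpoly a in
  let cprod k i := \prod_(l < i) iter l sigma k in
  (* (i) *)
  (forall c : K, c != 0 -> exists2 c' : K, c' != 0 & H c%:P = c'%:P) /\
  (forall c' : K, c' != 0 -> exists2 c : K, c != 0 & H c%:P = c'%:P) /\
  exists tau : K -> K,
    [/\ unit_group_aut tau,
        (forall z : K, z != 0 -> H z%:P = (tau z)%:P) &
        ((m - 1 <= n)%N ->
         exists2 k : K, k != 0 &
           [/\ (* (ii) *) H 'X = k%:P * 'X,
               (* (iii) *)
               (forall (i : nat) (z : K), (1 <= i <= m - 1)%N -> z != 0 ->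
                  H (z%:P * 'X^i) = Sf_mul sigma f (H z%:P) (Sf_pow sigma f (H 'X) i)
                  /\ Sf_pow sigma f (H 'X) i = Sf_pow sigma f (k%:P * 'X) i
                  /\ H (z%:P * 'X^i) = (tau z * cprod k i)%:P * 'X^i),
               (* (iv) *)
               (forall i : nat, (1 <= i <= m)%N ->
                  H (Sf_pow sigma f 'X i) = Sf_pow sigma f (H 'X) i
                  /\ Sf_pow sigma f (H 'X) i = Sf_pow sigma f (k%:P * 'X) i
                  /\ Sf_pow sigma f (k%:P * 'X) i = (cprod k i)%:P * Sf_pow sigma f 'X i) &
               H (\sum_(i < m) (a i)%:P * 'X^i) =
                 (cprod k m)%:P * \sum_(i < m) (a i)%:P * 'X^i])].
Proof.
move=> f cprod.
have [hS [fmon fsz]] := fpoly_facts _ _ a.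
have fs3 : (2 < size f)%N by rewrite /f fsz.
have eS : Sf_pow sigma f 'X (size f).-1 = \sum_(i < m) (a i)%:P * 'X^i.
  apply: Sp_top => //; first by rewrite /f fsz.
  by rewrite /f fsz ltnS.
rewrite /f fsz /= in eS.
have [h1 [h2 [tau [t1 t2 t3]]]] := main_sec fmon hirr hH hnri fs3 fsz eS.
split => //; split => //; exists tau; split => // hmn.
exact: t3 n hn hord hmn.
Qed.
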